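(* Let $X$ be a complex Banach space and let $\{S_h\},\{T_h\}\in C_b((0,1],B(X))$ be asymptotically quasinilpotent equivalent. Then $Sp(\{T_h\})=Sp(\{S_h\})$.
   Context: $B(X)$ is the algebra of bounded linear operators on $X$. $C_b((0,1],B(X))$ denotes the set of families $\{T_h\}_{h\in(0,1]}\subset B(X)$ with $\sup_h\|T_h\|<\infty$. For $T,S\in B(X)$, $(T-S)^{[n]}=\sum_{k=0}^{n}(-1)^{n-k}\binom{n}{k}T^kS^{n-k}$. Families $\{S_h\},\{T_h\}$ are asymptotically quasinilpotent equivalent if $\lim_{n\to\infty}\big(\limsup_{h\to0}\|(S_h-T_h)^{[n]}\|\big)^{1/n}=\lim_{n\to\infty}\big(\limsup_{h\to0}\|(T_h-S_h)^{[n]}\|\big)^{1/n}=0$. The resolvent set of $\{S_h\}$ is $r(\{S_h\})=\{\lambda\in\mathbb{C}:\ \exists\{\mathcal{R}(\lambda,S_h)\}\in C_b((0,1],B(X))$ with $\lim_{h\to0}\|(\lambda I-S_h)\mathcal{R}(\lambda,S_h)-I\|=\lim_{h\to0}\|\mathcal{R}(\lambda,S_h)(\lambda I-S_h)-I\|=0\}$, and the spectrum is $Sp(\{S_h\})=\mathbb{C}\setminus r(\{S_h\})$. *)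

(* Defs.v *)
From HB Require Import structures.
From mathcomp Require Import all_boot all_order all_algebra.
From mathcomp Require Import all_classical all_reals all_analysis.
From mathcomp Require Import complex.
Import Order.TTheory GRing.Theory Num.Theory.
Import numFieldNormedType.Exports.
Local Open Scope classical_set_scope.
Local Open Scope ring_scope.

Set Implicit Arguments.
Unset Strict Implicit.
Unset Printing Implicit Defensive.

Section Defs.
Variables (R : realType) (X : completeNormedModType R[i]).

(* real-valued norm on X (the norm of mathcomp is R[i]-valued, with zero
   imaginary part) *)
Definition nrm (x : X) : R := complex.Re `|x|.

Definition bounded_op (T : X -> X) : Prop :=
  (forall (a : R[i]) (x y : X), T (a *: x + y) = a *: T x + T y) /\
  continuous T.

Definition opnorm (T : X -> X) : R :=
  sup [set nrm (T x) | x in [set x : X | nrm x <= 1]].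

(* families indexed by h in (0,1] are functions R -> (X -> X), only the values
   on (0,1] matter. C_b((0,1], B(X)) *)
Definition Cb (F : R -> X -> X) : Prop :=
  (forall h : R, 0 < h <= 1 -> bounded_op (F h)) /\
  exists M : R, forall h : R, 0 < h <= 1 -> opnorm (F h) <= M.

Definition qdiff (n : nat) (T S : X -> X) : X -> X :=
  fun x => \sum_(k < n.+1)
     (((-1) ^+ (n - k) * ('C(n, k))%:R) : R[i]) *: iter k T (iter (n - k) S x).

Definition limsup0 (f : R -> R) : R :=
  inf [set sup [set f h | h in [set h : R | 0 < h < d]] | d in [set d : R | 0 < d <= 1]].

Definition aqn_one_side (S T : R -> X -> X) : Prop :=
  (fun n : nat => limsup0 (fun h => opnorm (qdiff n (S h) (T h))) `^ (n%:R)^-1)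
    @ \oo --> (0 : R).

Definition asympt_quasinilp_equiv (S T : R -> X -> X) : Prop :=
  aqn_one_side S T /\ aqn_one_side T S.

Definition in_resolvent (S : R -> X -> X) (l : R[i]) : Prop :=
  exists Rl : R -> X -> X, Cb Rl /\
    (fun h => opnorm (fun x => l *: Rl h x - S h (Rl h x) - x)) @ 0^'+ --> (0 : R) /\
    (fun h => opnorm (fun x => Rl h (l *: x - S h x) - x)) @ 0^'+ --> (0 : R).

Definition Sp (S : R -> X -> X) : set R[i] := ~` [set l | in_resolvent S l].

End Defs.

(* Main.v *)
Require Import Defs.
From HB Require Import structures.
From mathcomp Require Import all_boot all_order all_algebra.
From mathcomp Require Import all_classical all_reals all_analysis.
From mathcomp Require Import complex.
From mathcomp Require Import ring lra.
Import Order.TTheory GRing.Theory Num.Theory.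
Import numFieldNormedType.Exports.
Local Open Scope complex_scope.
Local Open Scope classical_set_scope.
Local Open Scope ring_scope.
Set Implicit Arguments.
Unset Strict Implicit.
Unset Printing Implicit Defensive.


Section Tool.
Variables (R : realType) (X : completeNormedModType R[i]).

Lemma ge0_real (z : R[i]) : 0 <= z -> z = (complex.Re z)%:C.
Proof. by move=> /ger0_Im; case: z => a b /= ->. Qed.

Definition cn (a : R[i]) : R := complex.Re `|a|.

Lemma nrm_ge0 (x : X) : 0 <= nrm x.
Proof. by have := normr_ge0 x; rewrite lecE => /andP[]. Qed.

Lemma cn_ge0 (a : R[i]) : 0 <= cn a.
Proof. by have := normr_ge0 a; rewrite lecE => /andP[]. Qed.

Lemma nrmE (x : X) : `|x| = (nrm x)%:C.
Proof. exact/ge0_real/normr_ge0. Qed.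

Lemma cnE (x : R[i]) : `|x| = (cn x)%:C.
Proof. exact/ge0_real/normr_ge0. Qed.

Lemma nrmD (x y : X) : nrm (x + y) <= nrm x + nrm y.
Proof.
have := ler_normD x y; rewrite !nrmE -rmorphD /= lecR //.
Qed.

Lemma nrmN (x : X) : nrm (- x) = nrm x.
Proof. by rewrite /nrm normrN. Qed.

Lemma nrmB (x y : X) : nrm (x - y) <= nrm x + nrm y.
Proof. by rewrite -(nrmN y) nrmD. Qed.

Lemma nrmZ (a : R[i]) (x : X) : nrm (a *: x) = cn a * nrm x.
Proof. by rewrite /nrm normrZ cnE nrmE -rmorphM. Qed.

Lemma nrm0 : nrm (0 : X) = 0.
Proof. by rewrite /nrm normr0. Qed.

Lemma nrm_eq0 (x : X) : nrm x = 0 -> x = 0.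
Proof. by move=> h; apply/normr0_eq0; rewrite nrmE h. Qed.

Lemma cnN1X n : cn ((-1) ^+ n) = 1.
Proof. by rewrite /cn normrX normrN1 expr1n. Qed.

Lemma cnD (a b : R[i]) : cn (a + b) <= cn a + cn b.
Proof. by have := ler_normD a b; rewrite !cnE -rmorphD /= lecR. Qed.

Lemma cnM (a b : R[i]) : cn (a * b) = cn a * cn b.
Proof. by rewrite /cn normrM cnE [`|b|]cnE -rmorphM. Qed.

Lemma cnR (r : R) : cn r%:C = `|r|.
Proof. by rewrite /cn normc_def /= expr0n /= addr0 sqrtr_sqr. Qed.

End Tool.
Section Tool2.
Variables (R : realType) (X : completeNormedModType R[i]).
Implicit Types F G : X -> X.

Definition lin F := forall (a : R[i]) (x y : X), F (a *: x + y) = a *: F x + F y.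
Definition bnd F (c : R) := forall x, nrm (F x) <= c * nrm x.

Lemma lin_cont F c : lin F -> bnd F c -> continuous F.
Proof.
move=> lF bF.
pose G : {linear X -> X} := HB.pack F (GRing.isLinear.Build R[i] X X *:%R F lF).
have -> : F = G by [].
apply/linear_bounded_continuous/linear_boundedP.
exists (Num.max c 0)%:C; split; first by rewrite realE ler0c le_max lexx orbT.
move=> r hr x; have hr' := ltW hr.
have c0 : 0 <= Num.max c 0 by rewrite le_max lexx orbT.
rewrite nrmE [`|x|]nrmE; apply: (le_trans _ (ler_wpM2r _ hr')); last first.
  by rewrite ler0c nrm_ge0.
rewrite -rmorphM /= lecR; apply: (le_trans (bF x)); apply: ler_wpM2r.
  exact: nrm_ge0.
by rewrite le_max lexx.
Qed.


Lemma bop_lin F : bounded_op F -> lin F.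
Proof. by case. Qed.

Lemma lin0 F : lin F -> F 0 = 0.
Proof.
move=> lF; have := lF 1 0 0; rewrite scaler0 addr0 scale1r.
by move/esym; rewrite -[X in _ = X]addr0 => /addrI.
Qed.

Lemma bop_bnd_ex F : bounded_op F -> exists c, 0 <= c /\ bnd F c.
Proof.
case=> lF cF.
pose G : {linear X -> X} := HB.pack F (GRing.isLinear.Build R[i] X X *:%R F lF).
have cG : continuous G by [].
move/linear_bounded_continuous: cG => /linear_boundedP /pinfty_ex_gt0 [r r0 hr].
exists (complex.Re r); have re := ge0_real (ltW r0).
split; first by rewrite -ler0c -re ltW.
move=> x; have := hr x; rewrite nrmE [`|x|]nrmE re -rmorphM /= lecR //.
Qed.

Lemma lin_bnd_bop F c : lin F -> bnd F c -> bounded_op F.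
Proof. by move=> lF bF; split => //; exact: lin_cont bF. Qed.

Definition ball1 := [set x : X | nrm x <= 1].

Lemma opnorm_ge0 F : 0 <= opnorm F.
Proof.
rewrite /opnorm; set E := (X in sup X).
have [hb|hb] := pselect (has_ubound E).
  apply: (le_trans (nrm_ge0 (F 0))); apply: ub_le_sup hb _ _.
  by exists 0 => //; rewrite /= nrm0 ler01.
by rewrite sup_out // => -[].
Qed.

Lemma opnorm_le F c : 0 <= c -> bnd F c -> opnorm F <= c.
Proof.
move=> c0 bF; apply: ge_sup.
  by exists (nrm (F 0)); exists 0 => //; rewrite /= nrm0 ler01.
move=> _ [x /= x1 <-]; apply: le_trans (bF x) _.
by rewrite -[X in _ <= X]mulr1 ler_wpM2l.
Qed.

Lemma bop_bnd F : bounded_op F -> bnd F (opnorm F).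
Proof.
move=> bF; have [c [c0 hc]] := bop_bnd_ex bF.
have lF := bop_lin bF.
have hb : has_ubound [set nrm (F x) | x in ball1].
  exists c => _ [x /= x1 <-]; apply: le_trans (hc x) _.
  by rewrite -[X in _ <= X]mulr1 ler_wpM2l.
move=> x; have [x0|x0] := eqVneq (nrm x) 0.
  by rewrite (nrm_eq0 x0) lin0 // nrm0 mulr0.
have xp : 0 < nrm x by rewrite lt0r x0 nrm_ge0.
pose y := ((nrm x)^-1)%:C *: x.
have ny : nrm y = 1 by rewrite nrmZ cnR ger0_norm ?invr_ge0 ?nrm_ge0 // mulVf.
have : nrm (F y) <= sup [set nrm (F x) | x in ball1].
  by apply: ub_le_sup hb _ _; exists y => //; rewrite /ball1 /= ny lexx.
have -> : y = ((nrm x)^-1)%:C *: x + 0 by rewrite addr0.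
rewrite lF lin0 // addr0 nrmZ cnR ger0_norm ?invr_ge0 ?nrm_ge0 //.
by rewrite ler_pdivrMl // mulrC.
Qed.
End Tool2.


Section Q.
Variables (R : realType) (X : completeNormedModType R[i]).
Implicit Types F G S T : X -> X.

Lemma linZ F a x : lin F -> F (a *: x) = a *: F x.
Proof. by move=> lF; rewrite -[a *: x]addr0 lF lin0 // addr0. Qed.

Lemma linD F x y : lin F -> F (x + y) = F x + F y.
Proof. by move=> lF; rewrite -[x in LHS]scale1r lF scale1r. Qed.

Lemma linN F x : lin F -> F (- x) = - F x.
Proof. by move=> lF; rewrite -scaleN1r linZ // scaleN1r. Qed.

Lemma linB F x y : lin F -> F (x - y) = F x - F y.
Proof. by move=> lF; rewrite linD // linN. Qed.

Lemma lin_sum F m (f : 'I_m -> X) : lin F -> F (\sum_(i < m) f i) = \sum_(i < m) F (f i).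
Proof.
move=> lF; elim: m f => [|m IH] f; first by rewrite !big_ord0 lin0.
by rewrite !big_ord_recr /= linD // IH.
Qed.

Lemma qdiffS S T n x : lin S -> lin T ->
  qdiff n.+1 S T x = S (qdiff n S T x) - qdiff n S T (T x).
Proof.
move=> lS lT.
pose a (k : nat) : R[i] := (-1) ^+ (n - k) * ('C(n, k))%:R.
pose b (k : nat) : R[i] := (-1) ^+ (n - k) * ('C(n, k.+1))%:R.
pose u (k : nat) : X := iter k.+1 S (iter (n - k) T x).
have E1 : qdiff n.+1 S T x = ((-1) ^+ n.+1) *: iter n.+1 T x +
    \sum_(k < n.+1) b k *: u k + \sum_(k < n.+1) a k *: u k.
  rewrite /qdiff big_ord_recl /= subn0 bin0 mulr1 -addrA -big_split /=.
  congr (_ + _); apply: eq_bigr => k _ /=.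
  by rewrite /bump /= add1n subSS binS natrD mulrDr scalerDl.
have E2 : S (qdiff n S T x) = \sum_(k < n.+1) a k *: u k.
  rewrite /qdiff (lin_sum _ lS); apply: eq_bigr => k _.
  by rewrite linZ.
have E3 : qdiff n S T (T x) = ((-1) ^+ n) *: iter n.+1 T x +
    \sum_(k < n) a k.+1 *: u k.
  rewrite /qdiff big_ord_recl /= subn0 bin0 mulr1 -iterSr; congr (_ + _).
  apply: eq_bigr => k _ /=; rewrite /bump /= add1n /u /a.
  have hk : (k < n)%N := ltn_ord k.
  by rewrite -iterSr subnSK.
have E4 : \sum_(k < n.+1) b k *: u k = - \sum_(k < n) a k.+1 *: u k.
  rewrite big_ord_recr /= /b bin_small // mulr0 scale0r addr0 -sumrN.
  apply: eq_bigr => k _; have hk : (k < n)%N := ltn_ord k.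
  rewrite /a -scaleNr; congr (_ *: _).
  by rewrite -(subnSK hk) exprS mulN1r mulNr.
rewrite E1 E2 E3 E4 exprS mulN1r scaleNr; set P := \sum_(k < n) _; set Q := \sum_(k < n.+1) _.
by rewrite opprD addrC addrA.
Qed.


Lemma lin_comp F G : lin F -> lin G -> lin (fun x => F (G x)).
Proof. by move=> lF lG a x y; rewrite lG lF. Qed.

Lemma lin_add F G : lin F -> lin G -> lin (fun x => F x + G x).
Proof.
by move=> lF lG a x y; rewrite lF lG scalerDr addrACA.
Qed.

Lemma lin_scale F c : lin F -> lin (fun x => c *: F x).
Proof. by move=> lF a x y; rewrite lF scalerDr !scalerA mulrC. Qed.

Lemma lin_opp F : lin F -> lin (fun x => - F x).
Proof. by move=> lF a x y; rewrite lF opprD scalerN. Qed.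

Lemma lin_sub F G : lin F -> lin G -> lin (fun x => F x - G x).
Proof. by move=> lF lG; apply: lin_add => //; exact: lin_opp. Qed.

Lemma lin_id : lin (@id X).
Proof. by []. Qed.

Lemma lin_zero : lin (fun _ : X => 0).
Proof. by move=> a x y; rewrite scaler0 addr0. Qed.

Lemma lin_iter F n : lin F -> lin (iter n F).
Proof.
move=> lF; elim: n => [|n IH] //=.
by move=> a x y; rewrite !iterS IH lF.
Qed.

Lemma lin_ext F G : (forall x, F x = G x) -> lin F -> lin G.
Proof. by move=> e lF a x y; rewrite -!e. Qed.

Lemma bnd_ext F G c : (forall x, F x = G x) -> bnd F c -> bnd G c.
Proof. by move=> e bF x; rewrite -e. Qed.

Lemma bnd_le F c d : c <= d -> bnd F c -> bnd F d.
Proof.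
by move=> cd bF x; apply: le_trans (bF x) _; apply: ler_wpM2r => //; exact: nrm_ge0.
Qed.

Lemma bnd_comp F G c d : 0 <= c -> bnd F c -> bnd G d -> bnd (fun x => F (G x)) (c * d).
Proof.
move=> c0 bF bG x; apply: le_trans (bF _) _; rewrite -mulrA; exact: ler_wpM2l.
Qed.

Lemma bnd_add F G c d : bnd F c -> bnd G d -> bnd (fun x => F x + G x) (c + d).
Proof.
move=> bF bG x; apply: le_trans (nrmD _ _) _; rewrite mulrDl; exact: lerD.
Qed.

Lemma bnd_sub F G c d : bnd F c -> bnd G d -> bnd (fun x => F x - G x) (c + d).
Proof.
move=> bF bG x; apply: le_trans (nrmB _ _) _; rewrite mulrDl; exact: lerD.
Qed.

Lemma bnd_scale F c k : bnd F c -> bnd (fun x => k *: F x) (cn k * c).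
Proof.
move=> bF x; rewrite nrmZ -mulrA; apply: ler_wpM2l; [exact: cn_ge0 | exact: bF].
Qed.

Lemma bnd_id : bnd (@id X) 1.
Proof. by move=> x; rewrite mul1r. Qed.

Lemma bnd_zero : bnd (fun _ : X => 0) 0.
Proof. by move=> x; rewrite nrm0 mul0r. Qed.

Lemma bnd_iter F c n : 0 <= c -> bnd F c -> bnd (iter n F) (c ^+ n).
Proof.
move=> c0 bF; elim: n => [|n IH] /=; first by move=> x; rewrite expr0 mul1r.
move=> x; rewrite iterS; apply: le_trans (bF _) _; rewrite exprS -mulrA.
by apply: ler_wpM2l => //; exact: IH.
Qed.

Lemma qdiff0 S T x : qdiff 0 S T x = x.
Proof. by rewrite /qdiff big_ord1 /= mulr1 scale1r. Qed.

Lemma lin_qdiff S T n : lin S -> lin T -> lin (qdiff n S T).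
Proof.
move=> lS lT; elim: n => [|n IH].
  by apply: (lin_ext (F := id)) => // x; rewrite qdiff0.
apply: (lin_ext (F := fun x => S (qdiff n S T x) - qdiff n S T (T x))).
  by move=> x; rewrite qdiffS.
by apply: lin_sub; apply: lin_comp.
Qed.

Lemma bnd_qdiff S T n K : lin S -> lin T -> 0 <= K -> bnd S K -> bnd T K ->
  bnd (qdiff n S T) ((K + K) ^+ n).
Proof.
move=> lS lT K0 bS bT; elim: n => [|n IH].
  rewrite expr0; apply: (bnd_ext (F := id)) => [x|]; [by rewrite qdiff0 | exact: bnd_id].
apply: (bnd_ext (F := fun x => S (qdiff n S T x) - qdiff n S T (T x))).
  by move=> x; rewrite qdiffS.
rewrite exprS mulrDl; apply: bnd_sub; first exact: bnd_comp.
rewrite [K * _]mulrC; apply: bnd_comp => //.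
exact: exprn_ge0 (addr_ge0 K0 K0).
Qed.

End Q.


Section Tele.
Variables (R : realType) (X : completeNormedModType R[i]).
Variables (S T Rr : X -> X) (l : R[i]).
Hypotheses (lS : lin S) (lT : lin T) (lR : lin Rr).

Let A v := l *: v - S v.
Let B v := l *: v - T v.

Lemma helper1 (a1 E e a2 : X) : a1 + E - (a1 + e + a2) = - a2 + (E - e).
Proof.
rewrite !opprD addrC -!addrA (addrCA (- a2) a1 E) (addrCA (- e) a1) addKr.
by rewrite addrC -addrA.
Qed.

Lemma helper2 (x y z : X) : x + y + z - x = z + y.
Proof. by rewrite addrAC (addrAC x) subrr add0r addrC. Qed.

Definition xL N v := \sum_(n < N.+1) (-1) ^+ n *: iter n.+1 Rr (qdiff n S T v).
Definition yR N v := \sum_(n < N.+1) qdiff n T S (iter n.+1 Rr v).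

Lemma xL_eq N v : xL N (B v) - v =
  (-1) ^+ N *: iter N.+1 Rr (qdiff N.+1 S T v) +
  \sum_(n < N.+1) (-1) ^+ n *: iter n Rr (Rr (A (qdiff n S T v)) - qdiff n S T v).
Proof.
pose a n := iter n Rr (qdiff n S T v).
have lD n := lin_qdiff n lS lT.
have lI n := lin_iter n lR.
have term n : iter n.+1 Rr (qdiff n S T (B v)) =
    a n + iter n Rr (Rr (A (qdiff n S T v)) - qdiff n S T v) + a n.+1.
  rewrite /B linB // linZ // /a (qdiffS _ _ lS lT).
  set D := qdiff n S T v; set W := S D - qdiff n S T (T v).
  have -> : l *: D - qdiff n S T (T v) = A D + W by rewrite /W /A addrA subrK.
  rewrite (linD _ _ (lI n.+1)) iterSr; congr (_ + _).
  by rewrite -(linD _ _ (lI n)) addrC subrK.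
rewrite /xL; elim: N => [|N IH].
  have t0 := term 0; simpl in t0.
  rewrite !big_ord1 /= expr0 !scale1r t0 /a /= !qdiff0.
  exact: helper2.
have tN := term N.+1; simpl in tN.
rewrite big_ord_recr /= [in RHS]big_ord_recr /= addrAC IH tN /a /=.
rewrite exprS mulN1r !scaleNr !scalerDr.
exact: helper1.
Qed.

Lemma helper4 (a s e b : X) : - a + s + (a + e - b) = - b + (s + e).
Proof.
rewrite addrC -!addrA (addrCA (-b) (-a)) (addrCA e (-a)) addNKr.
by rewrite addrCA (addrC e).
Qed.

Lemma yR_eq N v : B (yR N v) - v =
  - qdiff N.+1 T S (iter N.+1 Rr v) +
  \sum_(n < N.+1) qdiff n T S (A (Rr (iter n Rr v)) - iter n Rr v).
Proof.
pose a n := qdiff n T S (iter n Rr v).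
have lE n := lin_qdiff n lT lS.
have lB : lin B.
  rewrite /B; apply: (lin_sub (F := fun v => l *: v)) => //.
by move=> c x y; rewrite scalerDr !scalerA mulrC.
have term n : B (qdiff n T S (iter n.+1 Rr v)) =
    a n + qdiff n T S (A (Rr (iter n Rr v)) - iter n Rr v) - a n.+1.
  rewrite /a /B (qdiffS _ _ lT lS) iterS.
  set w := Rr (iter n Rr v); set E := qdiff n T S.
  rewrite -(linD _ _ (lE n)) (addrC (iter n Rr v)) subrK /A.
  rewrite (linB _ _ (lE n)) (linZ _ _ (lE n)).
  by rewrite opprB addrA subrK.
rewrite /yR (lin_sum _ lB); elim: N => [|N IH].
  rewrite !big_ord1 term /a /= !qdiff0 /=.
  by rewrite addrAC addrC (addrC v) addrK.
have tN := term N.+1.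
rewrite big_ord_recr /= [in RHS]big_ord_recr /= addrAC IH tN /a /=.
exact: helper4.
Qed.

End Tele.



Section Filt.
Variable R : realType.

Lemma near_ex (P : R -> Prop) : (\forall h \near (0:R)^'+, P h) ->
  exists2 d : R, 0 < d & forall h, 0 < h < d -> P h.
Proof.
case=> e /= e0 He; exists e => // h /andP[h0 hd]; apply: He => //=.
by rewrite sub0r normrN gtr0_norm.
Qed.

Lemma ex_near (P : R -> Prop) (d : R) : 0 < d -> (forall h, 0 < h < d -> P h) ->
  \forall h \near (0:R)^'+, P h.
Proof.
move=> d0 H; exists d => //= h /=; rewrite sub0r normrN => hd h0.
by apply: H; rewrite h0 /= -(gtr0_norm h0).
Qed.

Lemma near01 : \forall h \near (0:R)^'+, 0 < h <= 1.
Proof. by apply: (ex_near ltr01) => h /andP[h0 h1]; rewrite h0 ltW. Qed.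

End Filt.

Section Diag.
Variables (R : realType) (X : completeNormedModType R[i]).

Fixpoint dd (d : nat -> R) (k : nat) : R :=
  match k with
  | 0%N => Num.min (d 0%N) 1
  | k'.+1 => Num.min (dd d k') (Num.min (d k) (k.+1%:R^-1))
  end.

Lemma dd_gt0 d k : (forall k, 0 < d k) -> 0 < dd d k.
Proof.
move=> dp; elim: k => [|k IH] /=; first by rewrite lt_min dp ltr01.
by rewrite !lt_min IH dp invr_gt0 ltr0n.
Qed.

Lemma dd_le d k : dd d k <= d k /\ dd d k <= k.+1%:R^-1.
Proof.
case: k => [|k] /=; first by rewrite !ge_min lexx invr1 lexx !orbT.
by rewrite !ge_min !lexx !orbT.
Qed.

Lemma dd_mono d j k : (j <= k)%N -> dd d k <= dd d j.
Proof.
elim: k => [|k IH]; first by rewrite leqn0 => /eqP ->.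
rewrite leq_eqVlt => /orP[/eqP -> //|]; rewrite ltnS => /IH.
by apply: le_trans; rewrite /= ge_min lexx.
Qed.

Lemma diag (F : nat -> R -> X -> X) (err : R -> (X -> X) -> R) (C : R) :
  0 <= C -> (forall h z, 0 <= err h z) ->
  (forall k, \forall h \near (0:R)^'+,
     lin (F k h) /\ bnd (F k h) C /\ err h (F k h) <= k.+1%:R^-1) ->
  exists G, Cb G /\ (fun h => err h (G h)) @ (0:R)^'+ --> (0:R).
Proof.
move=> C0 e0 H.
have /choice [d Hd] : forall k, exists d : R, 0 < d /\ forall h, 0 < h < d ->
    lin (F k h) /\ bnd (F k h) C /\ err h (F k h) <= k.+1%:R^-1.
  by move=> k; have [d d0 Hd] := near_ex (H k); exists d.
have dp k : 0 < d k by case: (Hd k).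
pose P h := [set k | h < dd d k /\ forall j, h < dd d j -> (j <= k)%N].
pose kh h := xget 0%N (P h).
have khP h : 0 < h -> h < dd d 0 -> P h (kh h).
  move=> h0 hd; apply: xgetPex.
  have [m hm] := ltr_add_invr h0; rewrite add0r in hm.
  have ub : forall j, h < dd d j -> (j <= m)%N.
    move=> j hj; have := lt_trans hm (lt_le_trans hj (dd_le d j).2).
    by rewrite ltf_pV2 ?posrE ?ltr0n // ltr_nat ltnS => /ltnW.
  have ex0 : exists j, (fun j => h < dd d j) j by exists 0%N.
  case: (@ex_maxnP (fun j => h < dd d j) m ex0 ub) => i Pi maxi.
  by exists i.
pose G h := if h < dd d 0 then F (kh h) h else (fun _ : X => 0).
have Gk h : 0 < h -> h < dd d 0 ->
    (lin (G h) /\ bnd (G h) C /\ err h (G h) <= (kh h).+1%:R^-1) /\ P h (kh h).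
  move=> h0 hd; have Pk := khP h h0 hd; split => //.
  rewrite /G hd; apply: (Hd (kh h)).2; rewrite h0 /=.
  exact: lt_le_trans Pk.1 (dd_le d _).1.
have Gb h : 0 < h -> lin (G h) /\ bnd (G h) C.
  move=> h0; case: (boolP (h < dd d 0)) => hd.
    by have [[? [? _]] _] := Gk h h0 hd.
  rewrite /G (negbTE hd); split; first exact: lin_zero.
  by apply: (bnd_le C0); exact: bnd_zero.
exists G; split.
  split.
    by move=> h /andP[h0 _]; have [lG bG] := Gb h h0; exact: lin_bnd_bop bG.
  by exists C => h /andP[h0 _]; have [_ bG] := Gb h h0; exact: opnorm_le.
apply/cvgr0Pnorm_lt => e ep.
have [K hK] := ltr_add_invr ep; rewrite add0r in hK.
apply: (ex_near (dd_gt0 K dp)) => h /andP[h0 hK'].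
have hd0 : h < dd d 0 := lt_le_trans hK' (dd_mono d (leq0n K)).
have [[_ [_ eh]] [_ mx]] := Gk h h0 hd0.
rewrite ger0_norm //; apply: le_lt_trans eh _; apply: le_lt_trans hK.
by rewrite lef_pV2 ?posrE ?ltr0n // ler_nat ltnS; apply: mx.
Qed.

End Diag.



Section LS.
Variable R : realType.

Lemma limsup0_prop (f : R -> R) (C : R) : (forall h, 0 < h <= 1 -> 0 <= f h <= C) ->
  0 <= limsup0 f /\ forall eta, 0 < eta -> \forall h \near (0:R)^'+, f h < limsup0 f + eta.
Proof.
move=> fb.
pose Sd d := sup [set f h | h in [set h : R | 0 < h < d]].
have Sd_ub d : 0 < d <= 1 -> has_ubound [set f h | h in [set h : R | 0 < h < d]].
  move=> /andP[d0 d1]; exists C => _ [h /andP[h0 hd] <-].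
  by have /andP[] := fb h (ltac:(rewrite h0 /=; exact: ltW (lt_le_trans hd d1))).
have Sd_ge d h : 0 < d <= 1 -> 0 < h < d -> f h <= Sd d.
  by move=> hd hh; apply: ub_le_sup (Sd_ub d hd) _ _; exists h.
have Sd_ge0 d : 0 < d <= 1 -> 0 <= Sd d.
  move=> hd; have /andP[d0 d1] := hd.
  have hh : 0 < d / 2 < d by rewrite divr_gt0 // ltr_pdivrMr // ltr_pMr // ltr1n.
  apply: le_trans (Sd_ge d (d / 2) hd hh).
  have /andP[h0 hd'] := hh.
  by have /andP[] := fb (d / 2) (ltac:(rewrite h0 /=; exact: ltW (lt_le_trans hd' d1))).
have lb : lbound [set Sd d | d in [set d : R | 0 < d <= 1]] 0.
  by move=> _ [d hd <-]; exact: Sd_ge0.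
have ne : [set Sd d | d in [set d : R | 0 < d <= 1]] !=set0.
  by exists (Sd 1); exists 1 => //=; rewrite ltr01 lexx.
have L0 : 0 <= limsup0 f by apply: lb_le_inf.
split => // eta eta0.
have [_ [d hd <-] hlt] := inf_adherent eta0 (conj ne (ex_intro _ 0 lb)).
have /andP[d0 _] := hd.
apply: (ex_near d0) => h hh; apply: le_lt_trans (Sd_ge d h hd hh) hlt.
Qed.

End LS.

Section DB.
Variables (R : realType) (X : completeNormedModType R[i]).

Lemma Cb_bnd (S : R -> X -> X) : Cb S ->
  exists K, 0 <= K /\ forall h, 0 < h <= 1 -> lin (S h) /\ bnd (S h) K.
Proof.
case=> bS [M hM]; exists (Num.max M 0); split; first by rewrite le_max lexx orbT.
move=> h hh; split; first exact: bop_lin (bS h hh).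
apply: bnd_le (bop_bnd (bS h hh)); rewrite le_max; apply/orP; left; exact: hM.
Qed.

Lemma Cb_bnd2 (S T : R -> X -> X) : Cb S -> Cb T ->
  exists K, 0 <= K /\ forall h, 0 < h <= 1 ->
    lin (S h) /\ bnd (S h) K /\ lin (T h) /\ bnd (T h) K.
Proof.
move=> /Cb_bnd [K1 [K10 H1]] /Cb_bnd [K2 [K20 H2]].
exists (Num.max K1 K2); split; first by rewrite le_max K10.
move=> h hh; have [l1 b1] := H1 h hh; have [l2 b2] := H2 h hh.
split => //; split; first by apply: bnd_le b1; rewrite le_max lexx.
by split => //; apply: bnd_le b2; rewrite le_max lexx orbT.
Qed.

Lemma near_forall_le (P : nat -> R -> Prop) N :
  (forall n, \forall h \near (0:R)^'+, P n h) ->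
  \forall h \near (0:R)^'+, forall n, (n <= N)%N -> P n h.
Proof.
move=> H; elim: N => [|N IH].
  by apply: filterS (H 0%N) => h Ph n; rewrite leqn0 => /eqP ->.
apply: filterS2 IH (H N.+1) => h IHh PN n.
by rewrite leq_eqVlt => /orP[/eqP -> //|]; rewrite ltnS; exact: IHh.
Qed.

Lemma Dbound (S T : R -> X -> X) (rho : R) : Cb S -> Cb T -> aqn_one_side S T ->
  0 < rho -> exists Lam, 0 <= Lam /\ forall N, \forall h \near (0:R)^'+,
    forall n, (n <= N)%N -> bnd (qdiff n (S h) (T h)) (Lam * rho ^+ n).
Proof.
move=> cS cT aq rho0.
have [K [K0 HK]] := Cb_bnd2 cS cT.
pose D n h := qdiff n (S h) (T h).
have Db n h : 0 < h <= 1 -> lin (D n h) /\ bnd (D n h) ((K + K) ^+ n).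
  move=> hh; have [lS [bS [lT bT]]] := HK h hh.
  split; first exact: lin_qdiff.
  exact: bnd_qdiff.
pose q n := limsup0 (fun h => opnorm (D n h)).
have qP n := limsup0_prop (f := fun h => opnorm (D n h)) (C := (K + K) ^+ n)
  (fun h hh => ltac:(have [lD bD] := Db n h hh;
     rewrite opnorm_ge0 /=; apply: opnorm_le => //;
     exact: exprn_ge0 (addr_ge0 K0 K0))).
have [n0 _ Hn0'] := cvgr0_norm_lt _ aq _ rho0.
have Hn0 n : (n0 <= n)%N -> q n `^ (n%:R^-1) < rho.
  by move=> /Hn0' /=; rewrite ger0_norm // powR_ge0.
pose n1 := maxn n0 1.
have qle n : (n1 <= n)%N -> q n <= rho ^+ n.
  move=> hn; have hn0 : (n0 <= n)%N by apply: leq_trans hn; rewrite leq_maxl.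
  have hn1 : (0 < n)%N by apply: leq_trans hn; rewrite leq_maxr.
  have q0 : 0 <= q n := (qP n).1.
  have := Hn0 n hn0 => hlt.
  have -> : q n = (q n `^ (n%:R^-1)) ^+ n.
    rewrite -powR_mulrn ?powR_ge0 // -powRrM mulVf ?powRr1 //.
    by rewrite pnatr_eq0 -lt0n.
  by apply: lerXn2r; rewrite ?nnegrE ?powR_ge0 ?ltW.
pose b := 2 + (K + K) / rho.
have b1 : 1 < b.
  rewrite /b ltr_wpDr //; last by rewrite ltr1n.
  by apply: divr_ge0; [exact: addr_ge0 | exact: ltW].
exists (2 + b ^+ n1); split.
  by rewrite addr_ge0 // exprn_ge0 // ltW // (lt_trans ltr01 b1).
move=> N; apply: near_forall_le => n.
have [hn|hn] := leqP n1 n.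
  have := (qP n).2 _ (exprn_gt0 n rho0).
  move=> Hq; apply: (filterS2 _ _ (@near01 R) Hq) => h hh hlt.
  have [lD bD] := Db n h hh.
  have bop := lin_bnd_bop lD bD.
  apply: bnd_le (bop_bnd bop); apply: le_trans (ltW hlt) _.
  apply: le_trans (lerD (qle n hn) (lexx _)) _.
  have r0 : 0 <= rho ^+ n by rewrite exprn_ge0 // ltW.
  have B0 : 0 <= b ^+ n1 by rewrite exprn_ge0 // ltW // (lt_trans ltr01 b1).
  set r := rho ^+ n in r0 *; set B := b ^+ n1 in B0 *; nra.
apply: (filterS _ (@near01 R)) => h hh.
have [lD bD] := Db n h hh.
apply: bnd_le bD.
have -> : (K + K) ^+ n = ((K + K) / rho) ^+ n * rho ^+ n.
  by rewrite -exprMn divfK // gt_eqF.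
apply: ler_wpM2r; first by rewrite exprn_ge0 ?ltW.
apply: le_trans (_ : b ^+ n <= _).
  have c0 : 0 <= (K + K) / rho.
    by apply: divr_ge0; [exact: addr_ge0 | exact: ltW].
  apply: lerXn2r; rewrite ?nnegrE //; first by rewrite ltW // (lt_trans ltr01 b1).
  by rewrite /b lerDr.
apply: le_trans (_ : b ^+ n1 <= _); first by rewrite (ler_eXn2l b1) ltnW.
by rewrite lerDr.
Qed.

End DB.



Section Asm.
Variables (R : realType) (X : completeNormedModType R[i]).

Lemma bnd_sum m (f : 'I_m -> X -> X) (c : 'I_m -> R) :
  (forall i, bnd (f i) (c i)) -> bnd (fun x => \sum_(i < m) f i x) (\sum_(i < m) c i).
Proof.
move=> H; elim: m f c H => [|m IH] f c H.
  by move=> x; rewrite !big_ord0 nrm0 mul0r.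
move=> x; rewrite !big_ord_recr /=.
have := bnd_add (IH (fun i => f (widen_ord (leqnSn m) i)) (fun i => c (widen_ord (leqnSn m) i)) (fun i => H _)) (H ord_max).
by move=> /(_ x).
Qed.

Lemma lin_sumf m (f : 'I_m -> X -> X) :
  (forall i, lin (f i)) -> lin (fun x => \sum_(i < m) f i x).
Proof.
move=> H; elim: m f H => [|m IH] f H.
  by move=> a x y; rewrite !big_ord0 scaler0 addr0.
move=> a x y; rewrite !big_ord_recr /=.
have := lin_add (IH (fun i => f (widen_ord (leqnSn m) i)) (fun i => H _)) (H ord_max).
by move=> /(_ a x y).
Qed.

Lemma geo_le2 m : \sum_(n < m) ((2 : R)^-1) ^+ n <= 2.
Proof.
have E : forall m, \sum_(n < m) ((2 : R)^-1) ^+ n = 2 - 2 * ((2 : R)^-1) ^+ m.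
  elim=> [|k IH]; first by rewrite big_ord0 expr0 mulr1 subrr.
  rewrite big_ord_recr /= IH exprS.
  set t := _ ^+ k.
  have h2 : (2 : R) != 0 by rewrite pnatr_eq0.
  by rewrite mulrA mulfV // mul1r; lra.
rewrite E lerBlDr lerDl mulr_ge0 // exprn_ge0 // invr_ge0 ler0n.
Qed.


Lemma left_step (S T Rr : X -> X) (l : R[i]) (M rho Lam e : R) N :
  lin S -> lin T -> lin Rr -> 0 <= M -> bnd Rr M -> 0 <= rho -> M * rho = 2^-1 ->
  0 <= Lam -> 0 <= e ->
  (forall n, (n <= N.+1)%N -> bnd (qdiff n S T) (Lam * rho ^+ n)) ->
  bnd (fun w => Rr (l *: w - S w) - w) e ->
  lin (xL S T Rr N) /\ bnd (xL S T Rr N) (M * Lam * 2) /\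
  opnorm (fun v => xL S T Rr N (l *: v - T v) - v) <= Lam * (2^-1) ^+ N.+1 + Lam * e * 2.
Proof.
move=> lS lT lR M0 bR r0 Mr L0 e0 bD be.
have h20 : 0 <= (2 : R)^-1 by rewrite invr_ge0 ler0n.
have key n : M ^+ n * (Lam * rho ^+ n) = Lam * (2^-1) ^+ n.
  by rewrite mulrCA -exprMn Mr.
split.
  apply: lin_sumf => n; apply: lin_scale; apply: lin_comp.
    exact: lin_iter. exact: lin_qdiff.
split.
  apply: bnd_le (bnd_sum (c := fun n : 'I_N.+1 => M * Lam * (2^-1) ^+ n) _).
    rewrite -mulr_sumr ler_wpM2l ?mulr_ge0 //; exact: geo_le2.
  move=> n; apply: bnd_le (bnd_scale _ (bnd_comp _ (bnd_iter n.+1 M0 bR) (bD n _))).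
  - by rewrite cnN1X mul1r exprS -mulrA key mulrA.
  - exact: exprn_ge0.
  - by rewrite ltnW // ltnS; exact: ltn_ord.
apply: opnorm_le.
  by rewrite addr_ge0 ?mulr_ge0 // exprn_ge0.
apply: (bnd_ext (F := fun v => (-1) ^+ N *: iter N.+1 Rr (qdiff N.+1 S T v) +
  \sum_(n < N.+1) (-1) ^+ n *: iter n Rr (Rr (l *: qdiff n S T v - S (qdiff n S T v)) - qdiff n S T v))).
  by move=> v; rewrite (xL_eq l lS lT lR).
apply: bnd_add.
  apply: bnd_le (bnd_scale _ (bnd_comp _ (bnd_iter N.+1 M0 bR) (bD N.+1 (leqnn _)))).
    by rewrite cnN1X mul1r key.
  exact: exprn_ge0.
apply: bnd_le (bnd_sum (c := fun n : 'I_N.+1 => Lam * e * (2^-1) ^+ n) _).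
  rewrite -mulr_sumr ler_wpM2l ?mulr_ge0 //; exact: geo_le2.
move=> n.
have bn : bnd (qdiff n S T) (Lam * rho ^+ n).
  by apply: bD; rewrite ltnW // ltnS; exact: ltn_ord.
apply: bnd_le (bnd_scale _ (bnd_comp _ (bnd_iter n M0 bR) (bnd_comp e0 be bn))).
  by rewrite cnN1X mul1r mulrCA key mulrCA mulrA.
exact: exprn_ge0.
Qed.


Lemma bnd_opp F c : bnd F c -> bnd (fun x : X => - F x) c.
Proof. by move=> bF x; rewrite nrmN. Qed.

Lemma right_step (S T Rr : X -> X) (l : R[i]) (M rho Lam e : R) N :
  lin S -> lin T -> lin Rr -> 0 <= M -> bnd Rr M -> 0 <= rho -> M * rho = 2^-1 ->
  0 <= Lam -> 0 <= e ->
  (forall n, (n <= N.+1)%N -> bnd (qdiff n T S) (Lam * rho ^+ n)) ->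
  bnd (fun w => l *: Rr w - S (Rr w) - w) e ->
  lin (yR S T Rr N) /\ bnd (yR S T Rr N) (M * Lam * 2) /\
  opnorm (fun v => l *: yR S T Rr N v - T (yR S T Rr N v) - v) <=
     Lam * (2^-1) ^+ N.+1 + Lam * e * 2.
Proof.
move=> lS lT lR M0 bR r0 Mr L0 e0 bD be.
have h20 : 0 <= (2 : R)^-1 by rewrite invr_ge0 ler0n.
have key n : Lam * rho ^+ n * M ^+ n = Lam * (2^-1) ^+ n.
  by rewrite -mulrA -exprMn (mulrC rho) Mr.
have bDn (n : 'I_N.+1) : bnd (qdiff n T S) (Lam * rho ^+ n).
  by apply: bD; rewrite ltnW // ltnS; exact: ltn_ord.
split.
  apply: lin_sumf => n; apply: lin_comp.
    exact: lin_qdiff. exact: lin_iter.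
split.
  apply: bnd_le (bnd_sum (c := fun n : 'I_N.+1 => M * Lam * (2^-1) ^+ n) _).
    rewrite -mulr_sumr ler_wpM2l ?mulr_ge0 //; exact: geo_le2.
  move=> n; apply: bnd_le (bnd_comp _ (bDn n) (bnd_iter n.+1 M0 bR)).
  - by rewrite exprS mulrCA key mulrA.
  - by rewrite mulr_ge0 // exprn_ge0.
apply: opnorm_le.
  by rewrite addr_ge0 ?mulr_ge0 // exprn_ge0.
apply: (bnd_ext (F := fun v => - qdiff N.+1 T S (iter N.+1 Rr v) +
  \sum_(n < N.+1) qdiff n T S (l *: Rr (iter n Rr v) - S (Rr (iter n Rr v)) - iter n Rr v))).
  by move=> v; rewrite -(yR_eq Rr l lS lT).
apply: bnd_add.
  apply: bnd_opp; apply: bnd_le (bnd_comp _ (bD N.+1 (leqnn _)) (bnd_iter N.+1 M0 bR)).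
    by rewrite key.
  by rewrite mulr_ge0 // exprn_ge0.
apply: bnd_le (bnd_sum (c := fun n : 'I_N.+1 => Lam * e * (2^-1) ^+ n) _).
  rewrite -mulr_sumr ler_wpM2l ?mulr_ge0 //; exact: geo_le2.
move=> n.
apply: bnd_le (bnd_comp _ (bDn n) (bnd_comp e0 be (bnd_iter n M0 bR))).
  by rewrite mulrCA key mulrA (mulrC e).
by rewrite mulr_ge0 // exprn_ge0.
Qed.

End Asm.



Section Inv.
Variables (R : realType) (X : completeNormedModType R[i]).

Lemma tail_small (Lam : R) k : 0 < Lam ->
  Lam * (2^-1) ^+ (Num.truncn (2 * Lam * k.+1%:R)).+1 <= (2 * k.+1%:R)^-1.
Proof.
move=> L0; set N := Num.truncn _.
have hN : 2 * Lam * k.+1%:R < N.+1%:R := truncnS_gt _.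
have h2 : (N.+1%:R : R) <= 2 ^+ N.+1.
  by rewrite -natrX ler_nat ltnW // ltn_expl.
have Np : (0 : R) < N.+1%:R by rewrite ltr0n.
rewrite exprVn; apply: (@le_trans _ _ (Lam / N.+1%:R)).
  apply: ler_wpM2l; first exact: ltW.
  by rewrite lef_pV2 ?posrE ?exprn_gt0.
rewrite ler_pdivrMr //.
have kp : (0 : R) < k.+1%:R by rewrite ltr0n.
have -> : (2 * k.+1%:R)^-1 * N.+1%:R = Lam * (N.+1%:R / (2 * Lam * k.+1%:R)).
  by field; rewrite !gt_eqF.
rewrite ler_pMr // ler_pdivlMr ?mul1r ?ltW //.
by rewrite !mulr_gt0.
Qed.


Lemma bop_eps (S Rr : X -> X) (l : R[i]) K M : lin S -> lin Rr -> bnd S K -> bnd Rr M ->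
  0 <= M -> bounded_op (fun w => Rr (l *: w - S w) - w).
Proof.
move=> lS lR bS bR M0.
have lA : lin (fun w => l *: w - S w).
  apply: (lin_sub (F := fun w => l *: w)) => //.
  by move=> c x y; rewrite scalerDr !scalerA mulrC.
apply: (@lin_bnd_bop _ _ _ (M * (cn l * 1 + K) + 1)).
  by apply: lin_sub; [exact: lin_comp | exact: lin_id].
apply: bnd_sub; last exact: bnd_id.
apply: bnd_comp => //; apply: bnd_sub => //.
by move=> x; rewrite nrmZ mulr1.
Qed.

Lemma bop_del (S Rr : X -> X) (l : R[i]) K M : lin S -> lin Rr -> bnd S K -> bnd Rr M ->
  0 <= K -> bounded_op (fun w => l *: Rr w - S (Rr w) - w).
Proof.
move=> lS lR bS bR K0.
apply: (@lin_bnd_bop _ _ _ (cn l * M + K * M + 1)).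
  apply: lin_sub; last exact: lin_id.
  apply: lin_sub; last exact: lin_comp.
  exact: lin_scale.
apply: bnd_sub; last exact: bnd_id.
apply: bnd_sub; first exact: bnd_scale.
exact: bnd_comp.
Qed.

Lemma left_inv (S T Rl : R -> X -> X) (l : R[i]) : Cb S -> Cb T -> aqn_one_side S T ->
  Cb Rl -> (fun h => opnorm (fun x => Rl h (l *: x - S h x) - x)) @ (0:R)^'+ --> (0:R) ->
  exists G, Cb G /\ (fun h => opnorm (fun x => G h (l *: x - T h x) - x)) @ (0:R)^'+ --> (0:R).
Proof.
move=> cS cT aq cR hR.
have [K [K0 HK]] := Cb_bnd2 cS cT.
have [M0 [M00 HM]] := Cb_bnd cR.
pose M := M0 + 1; have Mp : 0 < M by rewrite /M ltr_wpDl.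
pose rho := (M + M)^-1; have rp : 0 < rho by rewrite invr_gt0 addr_gt0.
have Mr : M * rho = 2^-1.
  by rewrite /rho; field; rewrite gt_eqF // addr_gt0.
have [Lam0 [L00 HD]] := Dbound cS cT aq rp.
pose Lam := Lam0 + 1; have Lp : 0 < Lam by rewrite /Lam ltr_wpDl.
pose N k := Num.truncn (2 * Lam * k.+1%:R).
pose F k h := xL (S h) (T h) (Rl h) (N k).
pose err h (z : X -> X) := opnorm (fun x => z (l *: x - T h x) - x).
apply: (@diag _ _ F err (M * Lam * 2)).
- by rewrite !mulr_ge0 // ltW.
- by move=> h z; exact: opnorm_ge0.
move=> k.
pose eta := (Lam * 4 * k.+1%:R)^-1.
have etap : 0 < eta by rewrite invr_gt0 !mulr_gt0 // ltr0n.
have H1 := cvgr0_norm_lt _ hR _ etap.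
have H2 := HD (N k).+1.
near=> h.
have hh : 0 < h <= 1 by near: h; exact: near01.
have he : `|opnorm (fun x => Rl h (l *: x - S h x) - x)| < eta by near: h; exact: H1.
have hd : forall n, (n <= (N k).+1)%N -> bnd (qdiff n (S h) (T h)) (Lam0 * rho ^+ n).
  by near: h; exact: H2.
have [lS [bS [lT bT]]] := HK h hh.
have [lR bR] := HM h hh.
have bR' : bnd (Rl h) M by apply: bnd_le bR; rewrite /M lerDl.
have bo := bop_eps l lS lR bS bR' (ltW Mp).
have be := bop_bnd bo.
have eg := opnorm_ge0 (fun w => Rl h (l *: w - S h w) - w).
rewrite ger0_norm // in he.
have bD' : forall n, (n <= (N k).+1)%N -> bnd (qdiff n (S h) (T h)) (Lam * rho ^+ n).
  move=> n hn; apply: bnd_le (hd n hn); apply: ler_wpM2r; first by rewrite exprn_ge0 ?ltW.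
  by rewrite /Lam lerDl.
have [lF [bF eF]] := @left_step R X (S h) (T h) (Rl h) l M rho Lam _ (N k) lS lT lR (ltW Mp) bR' (ltW rp) Mr (ltW Lp) eg bD' be.
split => //; split => //.
apply: le_trans eF _.
have -> : (k.+1%:R : R)^-1 = (2 * k.+1%:R)^-1 + Lam * eta * 2.
  by rewrite /eta; field; rewrite !gt_eqF // ltr0n.
apply: lerD; first exact: tail_small.
apply: ler_wpM2r => //; apply: ler_wpM2l; [exact: ltW | exact: ltW].
Unshelve. all: by end_near.
Qed.

Lemma right_inv (S T Rl : R -> X -> X) (l : R[i]) : Cb S -> Cb T -> aqn_one_side T S ->
  Cb Rl -> (fun h => opnorm (fun x => l *: Rl h x - S h (Rl h x) - x)) @ (0:R)^'+ --> (0:R) ->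
  exists G, Cb G /\ (fun h => opnorm (fun x => l *: G h x - T h (G h x) - x)) @ (0:R)^'+ --> (0:R).
Proof.
move=> cS cT aq cR hR.
have [K [K0 HK]] := Cb_bnd2 cS cT.
have [M0 [M00 HM]] := Cb_bnd cR.
pose M := M0 + 1; have Mp : 0 < M by rewrite /M ltr_wpDl.
pose rho := (M + M)^-1; have rp : 0 < rho by rewrite invr_gt0 addr_gt0.
have Mr : M * rho = 2^-1.
  by rewrite /rho; field; rewrite gt_eqF // addr_gt0.
have [Lam0 [L00 HD]] := Dbound cT cS aq rp.
pose Lam := Lam0 + 1; have Lp : 0 < Lam by rewrite /Lam ltr_wpDl.
pose N k := Num.truncn (2 * Lam * k.+1%:R).
pose F k h := yR (S h) (T h) (Rl h) (N k).
pose err h (z : X -> X) := opnorm (fun x => l *: z x - T h (z x) - x).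
apply: (@diag _ _ F err (M * Lam * 2)).
- by rewrite !mulr_ge0 // ltW.
- by move=> h z; exact: opnorm_ge0.
move=> k.
pose eta := (Lam * 4 * k.+1%:R)^-1.
have etap : 0 < eta by rewrite invr_gt0 !mulr_gt0 // ltr0n.
have H1 := cvgr0_norm_lt _ hR _ etap.
have H2 := HD (N k).+1.
near=> h.
have hh : 0 < h <= 1 by near: h; exact: near01.
have he : `|opnorm (fun x => l *: Rl h x - S h (Rl h x) - x)| < eta by near: h; exact: H1.
have hd : forall n, (n <= (N k).+1)%N -> bnd (qdiff n (T h) (S h)) (Lam0 * rho ^+ n).
  by near: h; exact: H2.
have [lS [bS [lT bT]]] := HK h hh.
have [lR bR] := HM h hh.
have bR' : bnd (Rl h) M by apply: bnd_le bR; rewrite /M lerDl.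
have bo := bop_del l lS lR bS bR' K0.
have be := bop_bnd bo.
have eg := opnorm_ge0 (fun w => l *: Rl h w - S h (Rl h w) - w).
rewrite ger0_norm // in he.
have bD' : forall n, (n <= (N k).+1)%N -> bnd (qdiff n (T h) (S h)) (Lam * rho ^+ n).
  move=> n hn; apply: bnd_le (hd n hn); apply: ler_wpM2r; first by rewrite exprn_ge0 ?ltW.
  by rewrite /Lam lerDl.
have [lF [bF eF]] := @right_step R X (S h) (T h) (Rl h) l M rho Lam _ (N k) lS lT lR (ltW Mp) bR' (ltW rp) Mr (ltW Lp) eg bD' be.
split => //; split => //.
apply: le_trans eF _.
have -> : (k.+1%:R : R)^-1 = (2 * k.+1%:R)^-1 + Lam * eta * 2.
  by rewrite /eta; field; rewrite !gt_eqF // ltr0n.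
apply: lerD; first exact: tail_small.
apply: ler_wpM2r => //; apply: ler_wpM2l; [exact: ltW | exact: ltW].
Unshelve. all: by end_near.
Qed.

End Inv.



Section Fin.
Variables (R : realType) (X : completeNormedModType R[i]).

Lemma transfer (S T : R -> X -> X) l : Cb S -> Cb T -> aqn_one_side S T ->
  aqn_one_side T S -> in_resolvent S l -> in_resolvent T l.
Proof.
move=> cS cT a1 a2 [Rl [cR [h1 h2]]].
have FF : Filter ((0:R)^'+) by exact: at_right_proper_filter.
have [x [cx hx]] := left_inv cS cT a1 cR h2.
have [y [cy hy]] := right_inv cS cT a2 cR h1.
exists x; split => //; split => //.
have [K [K0 HK]] := Cb_bnd2 cS cT.
have [Cx [Cx0 Hx]] := Cb_bnd cx.
have [Cy [Cy0 Hy]] := Cb_bnd cy.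
pose e1 h := opnorm (fun x0 => x h (l *: x0 - T h x0) - x0).
pose e2 h := opnorm (fun x0 => l *: y h x0 - T h (y h x0) - x0).
pose c := cn l + K.
have hg : (fun h => e2 h + c * (e1 h * Cy + Cx * e2 h)) @ (0:R)^'+ --> (0:R).
  have t1 := cvgMr_tmp (FF:=FF) (b:=Cy) hx.
  have t2 := cvgMl_tmp (FF:=FF) (a:=Cx) hy.
  have t3 := cvgD (FF:=FF) t1 t2.
  have t4 := cvgMl_tmp (FF:=FF) (a:=c) t3.
  have t5 := cvgD (FF:=FF) hy t4.
  rewrite mul0r mulr0 addr0 mulr0 addr0 in t5.
  exact: t5.
apply/cvgr0Pnorm_lt => eps ep.
near=> h.
have hh : 0 < h <= 1 by near: h; exact: near01.
have hgh : `|e2 h + c * (e1 h * Cy + Cx * e2 h)| < eps by near: h; exact: (cvgr0_norm_lt _ hg _ ep).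
have [lS [bS [lT bT]]] := HK h hh.
have [lx bx] := Hx h hh.
have [ly by'] := Hy h hh.
pose B := fun w => l *: w - T h w.
have lB : lin B.
  apply: (lin_sub (F := fun w => l *: w)) => //.
  by move=> a u w; rewrite scalerDr !scalerA mulrC.
have bB : bnd B c.
  by apply: bnd_sub => // u; rewrite nrmZ.
have bE1 : bnd (fun w => x h (B w) - w) (e1 h).
  apply: bop_bnd; apply: (@lin_bnd_bop _ _ _ (Cx * c + 1)).
    by apply: lin_sub; [exact: lin_comp | exact: lin_id].
  by apply: bnd_sub; [exact: bnd_comp | exact: bnd_id].
have bE2 : bnd (fun w => B (y h w) - w) (e2 h).
  apply: bop_bnd; apply: (@lin_bnd_bop _ _ _ (c * Cy + 1)).
    by apply: lin_sub; [exact: lin_comp | exact: lin_id].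
  apply: bnd_sub; [apply: bnd_comp => // | exact: bnd_id].
  by rewrite /c addr_ge0 // cn_ge0.
have c0 : 0 <= c by rewrite /c addr_ge0 // cn_ge0.
have e10 : 0 <= e1 h := opnorm_ge0 _.
have e20 : 0 <= e2 h := opnorm_ge0 _.
have bf : bnd (fun v => l *: x h v - T h (x h v) - v) (e2 h + c * (e1 h * Cy + Cx * e2 h)).
  apply: (bnd_ext (F := fun v => (B (y h v) - v) + B ((x h (B (y h v)) - y h v) - x h (B (y h v) - v)))).
    move=> v.
    have e : x h (B (y h v) - v) = x h (B (y h v)) - x h v := linB _ _ lx.
    have hh1 : forall a b d : X, a - b - (a - d) = d - b.
      by move=> a b d; rewrite opprB addrC addrA subrK.
    have hh2 : forall p q r : X, p - q + (r - p) = r - q.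
      by move=> p q r; rewrite addrC addrA subrK.
    by rewrite e hh1 (linB _ _ lB) hh2.
  apply: bnd_add => //; apply: bnd_comp => //.
  apply: bnd_sub.
    exact: (bnd_comp (F := fun w => x h (B w) - w) (G := y h) e10 bE1 by').
  exact: (bnd_comp (F := x h) (G := fun w => B (y h w) - w) Cx0 bx bE2).
have hle := opnorm_le (addr_ge0 e20 (mulr_ge0 c0 (addr_ge0 (mulr_ge0 e10 Cy0) (mulr_ge0 Cx0 e20)))) bf.
rewrite ger0_norm; last exact: opnorm_ge0.
apply: le_lt_trans hle _; apply: le_lt_trans hgh; exact: ler_norm.
Unshelve. all: by end_near.
Qed.

End Fin.

Unset Implicit Arguments.

Theorem theorem26 (R : realType) (X : completeNormedModType R[i])
    (S T : R -> X -> X) :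
  Cb S -> Cb T -> asympt_quasinilp_equiv S T -> Sp T = Sp S.
Proof.
move=> cS cT [a1 a2]; rewrite /Sp; congr (~` _); apply/seteqP; split => l /= h.
  exact: (transfer cT cS a2 a1 h).
exact: (transfer cS cT a1 a2 h).
Qed.
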